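(* For every finite simplicial graph $\Delta$ and every $m\in\mathbb{N}$, $m\ge1$, the partially commutative group $\mathbb{G}(\Delta)$ and the partially commutative group $\mathbb{G}(\Delta_m)$ of its $m$-inflation are universally equivalent.
   Context: $\mathbb{G}(\Gamma)=\langle V(\Gamma)\mid [x,y]=1 \text{ for } (x,y)\in E(\Gamma)\rangle$. The $m$-inflation $\Delta_m$ of $\Delta$ has vertices $v_1,\dots,v_m$ for each $v\in V(\Delta)$; $v_i,v_j$ are adjacent for $i\ne j$, and $v_i,w_k$ ($v\ne w$) are adjacent iff $(v,w)\in E(\Delta)$. Thus $\mathbb{G}(\Delta_m)$ is the graph product over $\Delta$ with vertex groups $\mathbb{Z}^m$. Two groups are universally equivalent if they satisfy the same universal first-order sentences in the language of groups. *)

(* Defs.v *)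
From mathcomp Require Import all_boot.
Set Implicit Arguments.
Unset Strict Implicit.
Unset Printing Implicit Defensive.

Inductive gterm : Type :=
  | GVar : nat -> gterm
  | GOne : gterm
  | GMul : gterm -> gterm -> gterm
  | GInv : gterm -> gterm.

Inductive qfformula : Type :=
  | FTrue : qfformula
  | FFalse : qfformula
  | FEq : gterm -> gterm -> qfformula
  | FNot : qfformula -> qfformula
  | FAnd : qfformula -> qfformula -> qfformula
  | FOr : qfformula -> qfformula -> qfformula
  | FImp : qfformula -> qfformula -> qfformula.

(* A group given as a carrier together with its equality (a congruence),
   e.g. words modulo the relations of a presentation. *)
Record groupStr := GroupStr {
  gcarrier :> Type;
  geq : gcarrier -> gcarrier -> Prop;
  gmul : gcarrier -> gcarrier -> gcarrier;
  ginv : gcarrier -> gcarrier;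
  gone : gcarrier
}.

Fixpoint eval_term (G : groupStr) (s : nat -> G) (t : gterm) : G :=
  match t with
  | GVar i => s i
  | GOne => gone G
  | GMul a b => gmul (eval_term s a) (eval_term s b)
  | GInv a => ginv (eval_term s a)
  end.

Fixpoint holds (G : groupStr) (s : nat -> G) (f : qfformula) : Prop :=
  match f with
  | FTrue => True
  | FFalse => False
  | FEq a b => geq (eval_term s a) (eval_term s b)
  | FNot g => ~ holds s g
  | FAnd g h => holds s g /\ holds s h
  | FOr g h => holds s g \/ holds s h
  | FImp g h => holds s g -> holds s h
  end.

(* A universal sentence  forall x_0 ... x_n, phi  (phi quantifier-free) holds
   in G iff phi holds under every assignment of the variables. *)
Definition satisfies_universal (G : groupStr) (phi : qfformula) : Prop :=
  forall s : nat -> G, holds s phi.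

Definition universally_equivalent (G H : groupStr) : Prop :=
  forall phi : qfformula, satisfies_universal G phi <-> satisfies_universal H phi.

Definition simplicial {V : finType} (e : rel V) : Prop :=
  symmetric e /\ irreflexive e.

Definition inflation_rel {V : finType} (e : rel V) (m : nat) : rel (V * 'I_m) :=
  fun p q => ((p.1 == q.1) && (p.2 != q.2)) || ((p.1 != q.1) && e p.1 q.1).

(* Words in the letters v^{+1} (v,true) and v^{-1} (v,false). *)
Definition letter_inv {V : Type} (x : V * bool) : V * bool := (x.1, ~~ x.2).
Definition word_inv {V : Type} (w : seq (V * bool)) : seq (V * bool) :=
  rev (map letter_inv w).

(* The congruence on words generated by free cancellation and the relations
   [x,y] = 1 for (x,y) an edge. *)
Inductive raag_eq {V : Type} (e : rel V) : seq (V * bool) -> seq (V * bool) -> Prop :=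
  | raag_refl w : raag_eq e w w
  | raag_sym u w : raag_eq e u w -> raag_eq e w u
  | raag_trans u v w : raag_eq e u v -> raag_eq e v w -> raag_eq e u w
  | raag_cancel u v x : raag_eq e (u ++ x :: letter_inv x :: v) (u ++ v)
  | raag_comm u v a b : e a b ->
      raag_eq e (u ++ (a, true) :: (b, true) :: v) (u ++ (b, true) :: (a, true) :: v).

Definition RAAG {V : Type} (e : rel V) : groupStr :=
  @GroupStr (seq (V * bool)) (raag_eq e) cat word_inv [::].
Arguments inflation_rel {V} e m.

(* Main.v *)
Require Import Defs.
From mathcomp Require Import all_boot all_algebra zify.
Set Implicit Arguments.
Unset Strict Implicit.
Import GRing.Theory Num.Theory.

Section RaagLemmas.
Variables (W : Type) (E : rel W).
Hypothesis Esym : symmetric E.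
Notation req := (raag_eq E).

Lemma req_ctx p q u v : req u v -> req (p ++ u ++ q) (p ++ v ++ q).
Proof.
elim=> {u v} [w|u w _ IH|u v w _ IH1 _ IH2|u v x|u v a b Eab].
- exact: raag_refl.
- exact: raag_sym.
- exact: raag_trans IH2.
- rewrite -!catA /=; have := raag_cancel E (p ++ u) (v ++ q) x; by rewrite -!catA.
- have := raag_comm (p ++ u) (v ++ q) Eab; by rewrite -!catA.
Qed.

Lemma req_catl p u v : req u v -> req (p ++ u) (p ++ v).
Proof. by move=> h; have := req_ctx p [::] h; rewrite !cats0. Qed.
Lemma req_catr q u v : req u v -> req (u ++ q) (v ++ q).
Proof. by move=> h; have := req_ctx [::] q h. Qed.
Lemma req_cat a a' b b' : req a a' -> req b b' -> req (a ++ b) (a' ++ b').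
Proof. move=> h1 h2; apply: raag_trans (req_catr _ h1) (req_catl _ h2). Qed.
Lemma req_cons x u v : req u v -> req (x :: u) (x :: v).
Proof. exact: (req_catl [:: x]). Qed.

Lemma req_ins u v x : req (u ++ v) (u ++ x :: letter_inv x :: v).
Proof. apply: raag_sym; exact: raag_cancel. Qed.

Lemma letter_invK (x : W * bool) : letter_inv (letter_inv x) = x.
Proof. by case: x => a b; rewrite /letter_inv /= negbK. Qed.

Lemma req_pm a b : E a b -> req [:: (a,true); (b,false)] [:: (b,false); (a,true)].
Proof.
move=> Eab.
apply: raag_trans (req_ins [::] [:: (a,true); (b,false)] (b,false)) _ => /=.
apply: raag_trans (_ : req [:: (b, false); (a, true); (b, true); (b, false)] _).
  by apply: (raag_comm [:: (b,false)] [:: (b,false)]); rewrite Esym.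
exact: (raag_cancel E [:: (b,false); (a,true)] [::] (b,true)).
Qed.

Lemma req_comm2 (x y : W * bool) : E x.1 y.1 -> req [:: x; y] [:: y; x].
Proof.
case: x => a [] ; case: y => b [] /= Eab.
- exact: (raag_comm [::] [::] Eab).
- exact: req_pm.
- by apply: raag_sym; apply: req_pm; rewrite Esym.
- apply: raag_trans (req_ins [::] [:: (a,false); (b,false)] (b,false)) _ => /=.
  apply: raag_trans (_ : req [:: (b, false); (a, false); (b, true); (b, false)] _).
    have h : req [:: (b,true); (a,false)] [:: (a,false); (b,true)].
      by apply: req_pm; rewrite Esym.
    exact: (req_ctx [:: (b,false)] [:: (b,false)] h).
  exact: (raag_cancel E [:: (b,false); (a,false)] [::] (b,true)).
Qed.

Lemma req_pass x p q : all (fun y => E x.1 y.1) p -> req (x :: p ++ q) (p ++ x :: q).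
Proof.
elim: p => [|y p IH] /=; first by move=> _; exact: raag_refl.
case/andP=> Exy /IH h.
apply: raag_trans (_ : req (y :: x :: p ++ q) _).
  exact: (req_ctx [::] (p ++ q) (req_comm2 Exy)).
exact: req_cons.
Qed.

Lemma req_swapblocks p q : all (fun x => all (fun y => E x.1 y.1) q) p -> req (p ++ q) (q ++ p).
Proof.
elim: p => [|x p IH] /=; first by move=> _; rewrite cats0; exact: raag_refl.
case/andP=> hx /IH h.
apply: raag_trans (req_cons x h) _.
exact: req_pass p hx.
Qed.

Lemma req_invr u : req (u ++ word_inv u) [::].
Proof.
elim: u => [|x u IH] /=; first exact: raag_refl.
rewrite /word_inv /= rev_cons -cats1 catA.
apply: raag_trans (_ : req [:: x; letter_inv x] _).
  exact: (req_ctx [:: x] [:: letter_inv x] IH).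
exact: (raag_cancel E [::] [::] x).
Qed.

Lemma req_invl u : req (word_inv u ++ u) [::].
Proof.
elim: u => [|x u IH] /=; first exact: raag_refl.
rewrite /word_inv /= rev_cons -cats1 -catA /=.
apply: raag_trans (_ : req _ (word_inv u ++ u)) IH.
have := raag_cancel E (word_inv u) u (letter_inv x); by rewrite letter_invK.
Qed.

Lemma req_eq_inv a b : req (a ++ word_inv b) [::] -> req a b.
Proof.
move=> h.
apply: raag_trans (_ : req (a ++ word_inv b ++ b) _).
  have := req_catl a (raag_sym (req_invl b)); by rewrite cats0.
have := req_catr b h; by rewrite catA.
Qed.

Lemma req_inv_eq a b : req a b -> req (a ++ word_inv b) [::].
Proof. move=> h; apply: raag_trans (req_catr _ h) (req_invr b). Qed.

End RaagLemmas.

Section Syl.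
Variables (V : eqType) (e : rel V) (A : zmodType).
Hypotheses (esym : symmetric e) (eirr : irreflexive e).
Local Notation S := (V * A)%type.
Local Open Scope ring_scope.

Definition cm (v : V) (a : A) : seq S := if a == 0 then [::] else [:: (v, a)].

Fixpoint mrg (x : S) (u : seq S) : option (seq S) :=
  match u with
  | [::] => None
  | y :: u' => if y.1 == x.1 then Some (cm y.1 (y.2 + x.2) ++ u')
               else if e x.1 y.1 then omap (cons y) (mrg x u') else None
  end.

Definition act (x : S) (u : seq S) : seq S :=
  if x.2 == 0 then u else if mrg x u is Some u' then u' else x :: u.

Fixpoint red (u : seq S) : bool :=
  if u is x :: u' then [&& x.2 != 0, mrg x u' == None & red u'] else true.

Inductive shf : seq S -> seq S -> Prop :=
  | shf_refl u : shf u u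
  | shf_sym u v : shf u v -> shf v u
  | shf_trans u v w : shf u v -> shf v w -> shf u w
  | shf_cons x u v : shf u v -> shf (x :: u) (x :: v)
  | shf_swap x y u : e x.1 y.1 -> shf (x :: y :: u) (y :: x :: u).

Lemma shf_size u v : shf u v -> size u = size v.
Proof. elim=> //=; intros; congruence. Qed.

Lemma shf_catl p u v : shf u v -> shf (p ++ u) (p ++ v).
Proof. by elim: p => //= x p IH h; apply: shf_cons; apply: IH. Qed.

Fixpoint reach (v : V) (s : seq V) : bool :=
  if s is w :: s' then (w == v) || (e v w && reach v s') else false.

Lemma mrg_none x u : (mrg x u == None) = ~~ reach x.1 (map fst u).
Proof.
elim: u => [|y u IH] //=; case: (y.1 == x.1) => //=.
by case: (e x.1 y.1) => //=; rewrite -IH; case: (mrg x u).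
Qed.

Lemma neq_adj (a b : V) : e a b -> (b == a) = false.
Proof. by move=> h; apply/eqP => ba; move: h; rewrite ba eirr. Qed.

Lemma mrg_adj x y u : e x.1 y.1 -> mrg x (y :: u) = omap (cons y) (mrg x u).
Proof. by move=> h /=; rewrite neq_adj // h. Qed.

Lemma act_adj x z u : e x.1 z.1 -> shf (act x (z :: u)) (z :: act x u).
Proof.
move=> h; rewrite /act; case: (x.2 == 0); first exact: shf_refl.
rewrite mrg_adj //; case: (mrg x u) => [w|] /=; first exact: shf_refl.
exact: shf_swap.
Qed.

Inductive oshf : option (seq S) -> option (seq S) -> Prop :=
  | oshfN : oshf None None
  | oshfS u v : shf u v -> oshf (Some u) (Some v).

Lemma mrg_shf x u v : shf u v -> oshf (mrg x u) (mrg x v).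
Proof.
elim=> {u v} [u|u v _ IH|u v w _ IH1 _ IH2|y u v Huv IH|y z u Eyz].
- by case: (mrg x u) => *; constructor; exact: shf_refl.
- by case: IH => *; constructor; exact: shf_sym.
- by case: IH1 IH2 => [|a b h]; inversion 1; constructor; apply: shf_trans h _.
- rewrite /=; case: (y.1 == x.1); first by constructor; apply: shf_catl.
  case: (e x.1 y.1) => /=; last constructor.
  by case: IH => *; constructor; apply: shf_cons.
- rewrite /=; case: (altP (y.1 =P x.1)) => [yx|nyx].
    have zx : (z.1 == x.1) = false by rewrite -yx; apply: neq_adj.
    rewrite zx -yx Eyz /=; constructor.

    rewrite /cm; case: ifP => _ /=; first exact: shf_refl.
    exact: shf_swap.
  case: (altP (z.1 =P x.1)) => [zx|nzx].
    have exy : e x.1 y.1 by rewrite -zx esym.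
    rewrite exy /=; constructor.
    rewrite /cm; case: ifP => _ /=; first exact: shf_refl.
    exact: shf_swap.
  idtac.
  case exy: (e x.1 y.1); case exz: (e x.1 z.1) => /=;
    rewrite ?(negbTE nyx) ?(negbTE nzx) ?exy ?exz /=; try constructor.
  case: (mrg x u) => [w|] /=; constructor; exact: shf_swap.
Qed.

Lemma act_shf x u v : shf u v -> shf (act x u) (act x v).
Proof.
move=> h; rewrite /act; case: (x.2 == 0) => //.
case: (mrg_shf x h) => [|a b hab] //; first exact: shf_cons.
Qed.

Lemma foldr_shf a b s : shf a b -> shf (foldr act a s) (foldr act b s).
Proof. by elim: s => //= x s IH h; apply: act_shf; apply: IH. Qed.

Lemma mrg_keep_none x y t t' : e x.1 y.1 -> mrg y t = None -> mrg x t = Some t' ->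
  mrg y t' = None.
Proof.
move=> exy /eqP; rewrite mrg_none => hy hx; apply/eqP; rewrite mrg_none.
elim: t t' hy hx => [|z t IH] t' //= hy.
case: ifP => [/eqP zx|zx].
  case=> <-; rewrite -zx in exy.
  have eyz : e y.1 z.1 by rewrite esym.
  rewrite (neq_adj eyz) eyz /= in hy.
  rewrite /cm; case: ifP => _ //=.
  by rewrite (neq_adj eyz) eyz.
case: ifP => // exz; case hm: (mrg x t) => [t0|] //= [<-] /=.
move: hy; case: (z.1 == y.1) => //=.
by case: (e y.1 z.1) => //= /IH ->.
Qed.

Lemma mrg_red x u u' : red u -> mrg x u = Some u' -> red u'.
Proof.
elim: u u' => [|y t IH] u' //= /and3P [y0 /eqP hy rt].
case: ifP => [/eqP yx|yx].
  case=> <-; rewrite /cm; case: ifP => s0 //=.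
  by rewrite s0 rt andbT /= mrg_none /= -(mrg_none y) hy.
case: ifP => // exy; case hm: (mrg x t) => [t0|] //= [<-] /=.
rewrite y0 (IH _ rt hm) andbT.
by rewrite (mrg_keep_none exy hy hm).
Qed.

Lemma act_red x u : red u -> red (act x u).
Proof.
move=> ru; rewrite /act; case: ifP => // x0.
case hm: (mrg x u) => [u'|]; first exact: mrg_red hm.
by rewrite /= x0 hm ru.
Qed.

Lemma foldr_red a s : red a -> red (foldr act a s).
Proof. by elim: s => //= x s IH h; apply: act_red; apply: IH. Qed.

Lemma mrg_both x y u ux uy : e x.1 y.1 -> mrg x u = Some ux -> mrg y u = Some uy ->
  exists w, mrg x uy = Some w /\ mrg y ux = Some w.
Proof.
move=> exy; have eyx : e y.1 x.1 by rewrite esym.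
elim: u ux uy => [|z t IH] ux uy //=.
case: ifP => [/eqP zx|zx].
  case=> <-; rewrite zx (neq_adj eyx) eyx.
  case hy: (mrg y t) => [ty|] //= [<-]; exists (cm z.1 (z.2 + x.2) ++ ty).
  rewrite /= zx eqxx; split => //.
  rewrite /cm; case: ifP => _ //=; by rewrite (neq_adj eyx) eyx hy.
case zy: (z.1 == y.1).
  move/eqP: zy => zy; have exz : e x.1 z.1 by rewrite zy.
  rewrite exz; case hx: (mrg x t) => [tx|] //= [<-] [<-].
  exists (cm z.1 (z.2 + y.2) ++ tx); rewrite /= zy eqxx; split => //.
  rewrite /cm; case: ifP => _ //=; by rewrite (neq_adj exy) exy hx.
case: ifP => // exz; case: ifP => // eyz.
case hx: (mrg x t) => [tx|] //= [<-]; case hy: (mrg y t) => [ty|] //= [<-].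
have [w [h1 h2]] := IH _ _ hx hy; exists (z :: w).
by rewrite /= zx zy exz eyz h1 h2.
Qed.

Lemma act_comm x y u : e x.1 y.1 -> shf (act x (act y u)) (act y (act x u)).
Proof.
move=> exy; have eyx : e y.1 x.1 by rewrite esym.
rewrite /act; case: (x.2 == 0); first exact: shf_refl.
case: (y.2 == 0); first exact: shf_refl.
case hx: (mrg x u) => [ux|]; case hy: (mrg y u) => [uy|].
- have [w [-> ->]] := mrg_both exy hx hy; exact: shf_refl.
- by rewrite mrg_adj // hx /= (mrg_keep_none exy hy hx); exact: shf_refl.
- by rewrite (mrg_adj _ eyx) hy /= (mrg_keep_none eyx hx hy); exact: shf_refl.
- by rewrite mrg_adj // hx (mrg_adj _ eyx) hy /=; exact: shf_swap.
Qed.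

Lemma mrg_none_vtx v a b u : (mrg (v, a) u == None) = (mrg (v, b) u == None).
Proof. by rewrite !mrg_none. Qed.

Lemma act_zero v u : act (v, 0) u = u.
Proof. by rewrite /act eqxx. Qed.

Lemma act_nz x u : x.2 != 0 -> act x u = if mrg x u is Some u' then u' else x :: u.
Proof. by rewrite /act => /negbTE ->. Qed.

Lemma act_same v a b u : red u -> shf (act (v, a) (act (v, b) u)) (act (v, a + b) u).
Proof.
move=> ru.
have [->|a0] := eqVneq a 0; first by rewrite add0r act_zero; exact: shf_refl.
have [->|b0] := eqVneq b 0; first by rewrite addr0 act_zero; exact: shf_refl.
case hb: (mrg (v, b) u) => [uy|].
  elim: u uy ru hb => [|[w c] t IH] uy //= /and3P [z0 /eqP hz rt].
  case: ifP => [/eqP zv|zv].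
    subst w; case=> ey.
    have -> : act (v, b) ((v, c) :: t) = uy by rewrite act_nz //= eqxx ey.
    rewrite -ey /cm; case: ifP => [/eqP zb|zb].
      have ha : mrg (v, a) t = None by apply/eqP; move/eqP: hz; rewrite !mrg_none.
      rewrite /= [act (v, a) t]act_nz // ha; have [ab|ab] := eqVneq (a + b) 0.
        rewrite ab act_zero.
        have -> : a = c by apply: (addIr b); rewrite ab zb.
        exact: shf_refl.
      rewrite act_nz //= eqxx.
      have -> : c + (a + b) = a by rewrite addrCA zb addr0.
      rewrite /cm (negbTE a0) /=; exact: shf_refl.
    rewrite /= [act (v, a) _]act_nz //= eqxx; have [ab|ab] := eqVneq (a + b) 0.
      have -> : c + b + a = c by rewrite -addrA (addrC b) ab addr0.
      rewrite ab act_zero /cm (negbTE z0) /=; exact: shf_refl.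
    have -> : c + b + a = c + (a + b) by rewrite -addrA (addrC b).
    rewrite act_nz //= eqxx; exact: shf_refl.
  case: ifP => // evz; case hb: (mrg (v, b) t) => [ty|] //= _.
  have -> : act (v, b) ((w, c) :: t) = (w, c) :: ty by rewrite act_nz //= zv evz hb.
  apply: shf_trans (@act_adj (v,a) (w,c) ty evz) _.
  have := IH _ rt hb; rewrite [act (v, b) t]act_nz // hb => h.
  apply: shf_trans (shf_cons (w, c) h) _.
  exact: shf_sym (@act_adj (v, a + b) (w,c) t evz).
have ha : forall c, mrg (v, c) u = None by move=> c; apply/eqP; move/eqP: hb; rewrite !mrg_none.
rewrite [act (v, b) u]act_nz // ha act_nz //= eqxx.
have [ab|ab] := eqVneq (a + b) 0.
  by rewrite ab act_zero /cm addrC ab eqxx; exact: shf_refl.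
by rewrite act_nz // ha /cm addrC (negbTE ab); exact: shf_refl.
Qed.

End Syl.

Section Sound.
Variables (V : eqType) (e : rel V) (A : zmodType).
Hypotheses (esym : symmetric e) (eirr : irreflexive e).
Variables (W : Type) (E : rel W) (lift : W * bool -> V * A).
Local Open Scope ring_scope.
Hypothesis lift_inv : forall l, lift (letter_inv l) = ((lift l).1, - (lift l).2).
Hypothesis lift_rel : forall a b, E a b ->
  (lift (a, true)).1 = (lift (b, true)).1 \/ e (lift (a, true)).1 (lift (b, true)).1.

Definition G (u : seq (W * bool)) := foldr (@act V e A) [::] (map lift u).

Lemma G_red u : red e (G u).
Proof. exact: foldr_red. Qed.

Lemma G_cat p q : G (p ++ q) = foldr (@act V e A) (G q) (map lift p).
Proof. by rewrite /G map_cat foldr_cat. Qed.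

Lemma sound u u' : raag_eq E u u' -> shf e (G u) (G u').
Proof.
elim=> {u u'} [u|u v _ IH|u v w _ IH1 _ IH2|u v x|u v a b Eab].
- exact: shf_refl.
- exact: shf_sym.
- exact: shf_trans IH2.
- rewrite !G_cat; apply: (foldr_shf esym eirr).
  change (shf e (act e (lift x) (act e (lift (letter_inv x)) (G v))) (G v)).
  rewrite lift_inv; case: (lift x) => w c /=.
  apply: shf_trans (act_same eirr _ _ _ (G_red _)) _.
  by rewrite addrN act_zero; exact: shf_refl.
- rewrite !G_cat; apply: (foldr_shf esym eirr).
  change (shf e (act e (lift (a,true)) (act e (lift (b,true)) (G v)))
                (act e (lift (b,true)) (act e (lift (a,true)) (G v)))).
  case: (lift_rel Eab); case: (lift (a, true)) => wa ca; case: (lift (b, true)) => wb cb /=.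
    move=> ->; apply: shf_trans (act_same eirr _ _ _ (G_red _)) _.
    rewrite addrC; apply: shf_sym; exact: (act_same eirr _ _ _ (G_red _)).
  by move=> h; apply: act_comm.
Qed.

End Sound.

Section Infl.
Variables (V : finType) (e : rel V) (m : nat).
Hypotheses (esym : symmetric e) (eirr : irreflexive e).
Local Notation Wm := (V * 'I_m)%type.
Local Notation Am := 'rV[int]_m.
Local Notation Em := (inflation_rel e m).
Local Open Scope ring_scope.

Lemma Em_sym : symmetric Em.
Proof.
move=> [a i] [b j]; rewrite /inflation_rel /=.
by rewrite [b == a]eq_sym [j == i]eq_sym esym.
Qed.

Definition dlt (i : 'I_m) : Am := delta_mx 0 i.
Definition sgnv (b : bool) : int := if b then 1 else -1.
Definition liftm (l : Wm * bool) : V * Am := (l.1.1, if l.2 then dlt l.1.2 else - dlt l.1.2).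

Lemma liftm_inv l : liftm (letter_inv l) = ((liftm l).1, - (liftm l).2).
Proof. by case: l => [[v i] []] //=; rewrite opprK. Qed.

Lemma liftm_rel a b : Em a b ->
  (liftm (a, true)).1 = (liftm (b, true)).1 \/ e (liftm (a, true)).1 (liftm (b, true)).1.
Proof.
move: a b => [v i] [w j]; rewrite /inflation_rel /=.
case/orP => [/andP [/eqP -> _]|/andP [_ ->]]; first by left.
by right.
Qed.

Definition pow (x : Wm) (n : int) : seq (Wm * bool) :=
  match n with Posz k => nseq k (x, true) | Negz k => nseq k.+1 (x, false) end.

Lemma pow_step x b n : raag_eq Em ((x, b) :: pow x n) (pow x (n + sgnv b)).
Proof.
case: b; case: n => [k|k]; rewrite /sgnv.
- have -> : Posz k + 1 = Posz k.+1 by rewrite -addn1 PoszD.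
  exact: raag_refl.
- case: k => [|k].
    have -> : Negz 0 + 1 = 0 by [].
    exact: (raag_cancel _ [::] [::] (x,true)).
  have -> : Negz k.+1 + 1 = Negz k by rewrite !NegzE; lia.
  exact: (raag_cancel _ [::] _ (x,true)).
- case: k => [|k].
    have -> : Posz 0 + -1 = Negz 0 by [].
    exact: raag_refl.
  have -> : Posz k.+1 + -1 = Posz k by lia.
  exact: (raag_cancel _ [::] _ (x,false)).
- have -> : Negz k + -1 = Negz k.+1 by rewrite !NegzE; lia.
  exact: raag_refl.
Qed.

Definition Rs (z : V * Am) : seq (Wm * bool) :=
  flatten [seq pow (z.1, j) (z.2 0 j) | j <- enum 'I_m].
Definition R (u : seq (V * Am)) := flatten (map Rs u).

Lemma Rs0 v : Rs (v, 0) = [::].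
Proof.
rewrite /Rs; elim: (enum 'I_m) => //= j s ->; by rewrite mxE.
Qed.

Lemma pow_all x n : all (fun y => y.1 == x) (pow x n).
Proof. by case: n => k; rewrite all_nseq eqxx orbT. Qed.

Lemma coord_lift v i b (a : Am) j :
  (a + (liftm ((v, i), b)).2) 0 j = a 0 j + (if j == i then sgnv b else 0).
Proof.
rewrite /liftm /dlt /=; case: b; rewrite !mxE /=;
  by case: (j == i); rewrite ?oppr0.
Qed.

Lemma power_gen v i b (a : Am) (s : seq 'I_m) : uniq s ->
  let f := fun c : Am => flatten [seq pow (v, j) (c 0 j) | j <- s] in
  if i \in s then raag_eq Em (((v, i), b) :: f a) (f (a + (liftm ((v, i), b)).2))
  else f a = f (a + (liftm ((v, i), b)).2).
Proof.
elim: s => [|j s IH] /=; first by [].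
case/andP=> js us; move: (IH us) => {IH}.
rewrite in_cons (coord_lift v); case: (altP (i =P j)) => [ij|nij] /=.
  subst j; rewrite (negbTE js) eqxx => ->.
  exact: (req_catr _ (pow_step (v, i) b (a 0 i))).
rewrite eq_sym (negbTE nij) addr0.
case: (i \in s) => h; last by rewrite h.
apply: raag_trans (_ : raag_eq Em (pow (v, j) (a 0 j) ++ ((v, i), b) :: _) _).
  apply: (req_pass Em_sym); apply/allP => y /(allP (pow_all _ _)) /eqP -> /=.
  by rewrite /inflation_rel /= eqxx nij.
exact: req_catl.
Qed.

Lemma power v i b (a : Am) :
  raag_eq Em (((v, i), b) :: Rs (v, a)) (Rs (v, a + (liftm ((v, i), b)).2)).
Proof.
have := @power_gen v i b a (enum 'I_m) (enum_uniq _); by rewrite mem_enum.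
Qed.

Lemma R_cm w c t : R (cm w c ++ t) = Rs (w, c) ++ R t.
Proof. by rewrite /cm; case: ifP => [/eqP ->|_] //=; rewrite Rs0. Qed.

Lemma liftm_nz l : (liftm l).2 != 0.
Proof.
case: l => [[v i] b]; apply/negP => /eqP /matrixP /(_ 0 i).
by rewrite /liftm /dlt; case: b; rewrite /= ?mxE !eqxx.
Qed.

Lemma mrg_real l y y' : mrg e (liftm l) y = Some y' -> raag_eq Em (l :: R y) (R y').
Proof.
case: l => [[v i] b].
elim: y y' => [|[w c] t IH] y' //=.
case: ifP => [/eqP wv|wv].
  case=> <-; subst w; rewrite R_cm; exact: (req_catr _ (power _ _ _ _)).
case: ifP => // evw; case hm: (mrg _ _ t) => [t'|] //= [<-] /=.
apply: raag_trans (_ : raag_eq Em (Rs (w, c) ++ ((v, i), b) :: R t) _).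
  apply: (req_pass Em_sym); apply/allP => y.
  rewrite /Rs /= => /flatten_mapP [j _] /(allP (pow_all _ _)) /eqP -> /=.
  by rewrite /inflation_rel /= eq_sym wv evw.
apply: req_catl; exact: IH.
Qed.

Lemma complete w : raag_eq Em w (R (G e liftm w)).
Proof.
elim: w => [|l w IH] /=; first exact: raag_refl.
apply: raag_trans (req_cons l IH) _.
change (G e liftm (l :: w)) with (act e (liftm l) (G e liftm w)).
rewrite act_nz; last exact: liftm_nz.
case hm: (mrg _ _ _) => [y'|]; first exact: mrg_real.
case: l {hm} => [[v i] b] /=.
have := power v i b 0; rewrite Rs0 add0r /= => h.
exact: (req_catr _ h).
Qed.
End Infl.

Section Subst.
Variables (W1 W2 : Type) (E1 : rel W1) (E2 : rel W2).
Variable g : W1 * bool -> seq (W2 * bool).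
Definition subst (w : seq (W1 * bool)) := flatten (map g w).

Lemma subst_cat a b : subst (a ++ b) = subst a ++ subst b.
Proof. by rewrite /subst map_cat flatten_cat. Qed.

Hypothesis g_inv : forall l, g (letter_inv l) = word_inv (g l).

Lemma word_inv_cat (a b : seq (W2 * bool)) : word_inv (a ++ b) = word_inv b ++ word_inv a.
Proof. by rewrite /word_inv map_cat rev_cat. Qed.

Lemma subst_inv w : subst (word_inv w) = word_inv (subst w).
Proof.
elim: w => [|l w IH] //=.
rewrite /word_inv /= rev_cons -cats1 -/(word_inv w) subst_cat IH.
rewrite /subst /= cats0 g_inv -/(subst w).
by rewrite -word_inv_cat.
Qed.

Hypothesis g_rel : forall a b, E1 a b ->
  raag_eq E2 (g (a, true) ++ g (b, true)) (g (b, true) ++ g (a, true)).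

Lemma subst_req u v : raag_eq E1 u v -> raag_eq E2 (subst u) (subst v).
Proof.
elim=> {u v} [u|u v _ IH|u v w _ IH1 _ IH2|u v x|u v a b Eab].
- exact: raag_refl.
- exact: raag_sym.
- exact: raag_trans IH2.
- rewrite !subst_cat /subst /= -/(subst v) g_inv catA -catA.
  apply: req_catl; have := req_ctx [::] (subst v) (req_invr E2 (g x)).
  by rewrite /= -catA.
- rewrite !subst_cat /subst /= -/(subst v) !catA.
  apply: req_catr; rewrite -!catA; apply: req_catl; exact: g_rel.
Qed.

Lemma eval_subst (s : nat -> seq (W1 * bool)) t :
  @eval_term (RAAG E2) (fun i => subst (s i)) t = subst (@eval_term (RAAG E1) s t).
Proof.
elim: t => //= [a IHa b IHb|a IHa].
- by rewrite IHa IHb subst_cat.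
- by rewrite IHa subst_inv.
Qed.
End Subst.

Section H.
Variables (V : finType) (e : rel V) (m : nat).
Hypotheses (esym : symmetric e) (eirr : irreflexive e).
Variable k : 'I_m -> nat.
Local Notation Wm := (V * 'I_m)%type.
Local Notation Am := 'rV[int]_m.
Local Open Scope ring_scope.

Definition hl (l : Wm * bool) : seq (V * bool) := nseq (k l.1.2) (l.1.1, l.2).
Definition liftD (l : V * bool) : V * int := (l.1, sgnv l.2).
Definition phi (a : Am) : int := \sum_(j <- enum 'I_m) a 0 j * (k j)%:R.
Definition phi' (z : V * Am) : V * int := (z.1, phi z.2).

Lemma fold_same v (s : seq (V * int)) (y : seq (V * int)) : red e y -> all (fun x => x.1 == v) s ->
  shf e (foldr (@act V e int) y s) (act e (v, \sum_(x <- s) x.2) y).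
Proof.
move=> ry; elim: s => [|x s IH] /=; first by rewrite big_nil act_zero => _; exact: shf_refl.
case/andP => /eqP xv /IH h; rewrite big_cons.
apply: shf_trans (act_shf esym eirr x h) _.
rewrite -xv; case: x {xv h} => w c /=.
exact: (act_same eirr _ _ _ ry).
Qed.

Definition T (w : seq (Wm * bool)) : int := \sum_(x <- map liftD (subst hl w)) x.2.

Lemma T_cat a b : T (a ++ b) = T a + T b.
Proof. by rewrite /T subst_cat map_cat big_cat. Qed.

Lemma T_nseq n l : T (nseq n l) = T [:: l] *+ n.
Proof. elim: n => [|n IH]; first by rewrite /T big_nil. by rewrite -[nseq n.+1 l]/([:: l] ++ nseq n l) T_cat IH mulrS. Qed.

Lemma T_letter v j b : T [:: ((v, j), b)] = sgnv b *+ k j.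
Proof.
rewrite /T /subst /= cats0 /hl /=; elim: (k j) => [|n IH] /=; first by rewrite big_nil.
by rewrite big_cons IH mulrS.
Qed.

Lemma T_pow v j n : T (pow (v, j) n) = n * (k j)%:R.
Proof.
case: n => n; rewrite /pow.
  rewrite (T_nseq n) T_letter /sgnv -mulrnA -mulr_natl mulr1 natrM mulrC natz. by [].
rewrite (T_nseq n.+1) T_letter /sgnv NegzE.
rewrite -mulrnA mulNrn natrM mulNr mulrC natz. by [].
Qed.

Lemma T_Rs v (a : Am) : T (Rs (v, a)) = phi a.
Proof.
rewrite /Rs /phi /=; elim: (enum 'I_m) => [|j s IH] /=; first by rewrite /T /subst /= !big_nil.
by rewrite T_cat IH T_pow big_cons.
Qed.

Lemma all_sub v w : all (fun l : Wm * bool => l.1.1 == v) w ->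
  all (fun x => x.1 == v) (map liftD (subst hl w)).
Proof.
elim: w => [|l w IH] //= /andP [lv /IH h].
rewrite -[l :: w]/([:: l] ++ w) subst_cat map_cat all_cat h andbT.
by rewrite /subst /= cats0 /hl map_nseq all_nseq /= lv orbT.
Qed.

Lemma Rs_all v (a : Am) : all (fun l : Wm * bool => l.1.1 == v) (Rs (v, a)).
Proof.
rewrite /Rs /=; elim: (enum 'I_m) => [|j s IH] //=.
rewrite all_cat IH andbT; apply/allP => y /(allP (pow_all _ _)) /eqP -> //=.
Qed.

Lemma all_v v (a : Am) : all (fun x => x.1 == v) (map liftD (subst hl (Rs (v, a)))).
Proof. exact/all_sub/Rs_all. Qed.

Lemma G_hR (S : seq (V * Am)) :
  shf e (G e liftD (subst hl (R S))) (foldr (@act V e int) [::] (map phi' S)).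
Proof.
elim: S => [|[v a] S IH]; first exact: shf_refl.
rewrite -[R _]/(Rs (v, a) ++ R S) subst_cat G_cat.
apply: shf_trans (foldr_shf esym eirr _ IH) _.
apply: shf_trans (fold_same (foldr_red esym eirr _ (isT : red e [::])) (all_v v a)) _.
have hT := T_Rs v a; rewrite /T in hT; rewrite hT /=; exact: shf_refl.
Qed.

Lemma red_map (S : seq (V * Am)) : red e S -> all (fun x => phi x.2 != 0) S -> red e (map phi' S).
Proof.
elim: S => [|x S IH] //= /and3P [_ hx rS] /andP [px hS].
rewrite px IH // andbT mrg_none -map_comp.
by move: hx; rewrite mrg_none.
Qed.

Lemma foldr_id (u : seq (V * int)) : red e u -> foldr (@act V e int) [::] u = u.
Proof.
elim: u => [|x u IH] //= /and3P [x0 /eqP hx ru].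
by rewrite IH // act_nz // hx.
Qed.

End H.

Local Open Scope ring_scope.

Fixpoint horn (N : int) (cs : seq int) : int :=
  if cs is c :: cs' then c + N * horn N cs' else 0.

Lemma horn0 (N : nat) cs : all (fun c : int => (`|c| < N)%N) cs -> horn N cs = 0 ->
  all (fun c => c == 0) cs.
Proof.
elim: cs => [|c cs IH] //= /andP [hc hcs] h.
have [c0 t0] : c = 0 /\ horn N cs = 0.
  set t := horn N cs in h *.
  have [t1|[t1|t1]] : (t = 0 \/ 1 <= t \/ t <= -1) by lia.
  - lia.
  - nia.
  - nia.
by rewrite c0 eqxx IH.
Qed.

Lemma sum_horn (N : nat) (T : eqType) (f : T -> int) (s : seq T) : uniq s ->
  \sum_(j <- s) f j * ((N ^ index j s)%N)%:R = horn N (map f s).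
Proof.
elim: s => [|x s IH] /=; first by rewrite big_nil.
case/andP => xs us; rewrite big_cons eqxx expn0 mulr1 -IH //.
congr (_ + _); rewrite big_seq [in RHS]big_seq mulr_sumr.
apply: eq_bigr => j js; rewrite ifN; last by apply: contraNneq xs => ->.
by rewrite expnS natrM mulrCA natz.
Qed.

Lemma le_foldr_max (x : nat) s : x \in s -> (x <= foldr maxn 0 s)%N.
Proof.
elim: s => [|y s IH] //=; rewrite in_cons => /orP [/eqP ->|/IH h].
  exact: leq_maxl.
exact: leq_trans h (leq_maxr _ _).
Qed.

Lemma choose_k m (vals : seq 'rV[int]_m) : all (fun a => a != 0) vals ->
  exists k : 'I_m -> nat, all (fun a => phi k a != 0) vals.
Proof.
move=> hv.
set N := (foldr maxn 0 [seq absz (a 0 j) | a : 'rV[int]_m <- vals, j : 'I_m <- enum 'I_m]).+1.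
exists (fun j => (N ^ index j (enum 'I_m))%N).
apply/allP => a av; rewrite /phi sum_horn ?enum_uniq //.
apply/negP => /eqP h.
have hb : all (fun c : int => (`|c| < N)%N) [seq a 0 j | j <- enum 'I_m].
  apply/allP => c /mapP [j _ ->]; rewrite ltnS; apply: le_foldr_max.
  by apply: (allpairs_f (fun (a : 'rV[int]_m) (j : 'I_m) => absz (a 0 j))) => //; rewrite mem_enum.
have := horn0 hb h; rewrite all_map => /allP hz.
have := allP hv a av; apply/negP; rewrite negbK; apply/eqP/matrixP => i j.
by rewrite ord1 mxE; apply/eqP; apply: hz; rewrite mem_enum.
Qed.

Local Close Scope ring_scope.

Fixpoint atoms (f : qfformula) : seq (gterm * gterm) :=
  match f with
  | FEq a b => [:: (a, b)]
  | FNot g => atoms g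
  | FAnd g h | FOr g h | FImp g h => atoms g ++ atoms h
  | _ => [::]
  end.

Fixpoint allps (P : gterm -> gterm -> Prop) (l : seq (gterm * gterm)) : Prop :=
  if l is p :: l' then P p.1 p.2 /\ allps P l' else True.

Lemma allps_cat P l1 l2 : allps P (l1 ++ l2) -> allps P l1 /\ allps P l2.
Proof. by elim: l1 => //= p l IH [h /IH [h1 h2]]. Qed.

Lemma allps_of P (Q : gterm * gterm -> bool) l :
  (forall p, Q p -> P p.1 p.2) -> all Q l -> allps P l.
Proof. by move=> h; elim: l => //= p l IH /andP [/h ? /IH]. Qed.

Lemma transfer (G H : groupStr) (s : nat -> G) (s' : nat -> H) f :
  allps (fun a b => Defs.geq (eval_term s a) (eval_term s b) <-> Defs.geq (eval_term s' a) (eval_term s' b))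
    (atoms f) -> (holds s f <-> holds s' f).
Proof.
elim: f => //= [a b [h _]|g IH /IH h|g IHg h IHh /allps_cat [/IHg h1 /IHh h2]|
  g IHg h IHh /allps_cat [/IHg h1 /IHh h2]|g IHg h IHh /allps_cat [/IHg h1 /IHh h2]];
  by [|tauto].
Qed.

Section Main.
Variables (V : finType) (e : rel V) (m : nat).
Hypotheses (esym : symmetric e) (eirr : irreflexive e).
Local Notation Wm := (V * 'I_m)%type.
Local Notation Em := (inflation_rel e m).

Lemma hl_inv (k : 'I_m -> nat) (l : Wm * bool) : hl k (letter_inv l) = word_inv (hl k l).
Proof. by case: l => [[v i] b]; rewrite /hl /word_inv map_nseq rev_nseq. Qed.

Lemma hl_rel (k : 'I_m -> nat) (a b : Wm) : Em a b ->
  raag_eq e (hl k (a, true) ++ hl k (b, true)) (hl k (b, true) ++ hl k (a, true)).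
Proof.
case: a b => [v i] [w j]; rewrite /inflation_rel /hl /= => /orP [/andP [/eqP <- _]|/andP [_ evw]].
  by rewrite -!nseqD addnC; exact: raag_refl.
apply: (req_swapblocks esym); apply/allP => x /nseqP [-> _]; apply/allP => y /nseqP [-> _] //.
Qed.

Lemma liftD_inv (l : V * bool) : liftD (letter_inv l) = ((liftD l).1, - (liftD l).2)%R.
Proof. by case: l => v []. Qed.

Lemma liftD_rel (a b : V) : e a b ->
  (liftD (a, true)).1 = (liftD (b, true)).1 \/ e (liftD (a, true)).1 (liftD (b, true)).1.
Proof. by move=> h; right. Qed.

Lemma red_nz (A : zmodType) (u : seq (V * A)) : red e u -> all (fun x => x.2 != 0%R) u.
Proof. by elim: u => //= x u IH /and3P [-> _ /IH]. Qed.

Lemma reflect_atom (k : 'I_m -> nat) (A0 B0 : seq (Wm * bool)) :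
  all (fun x => phi k x.2 != 0%R) (G e (@liftm V m) (A0 ++ word_inv B0)) ->
  raag_eq e (subst (hl k) A0) (subst (hl k) B0) -> raag_eq Em A0 B0.
Proof.
move=> hnz hab.
set W := A0 ++ word_inv B0; set S := G e (@liftm V m) W.
have h1 : raag_eq e (subst (hl k) W) [::].
  rewrite /W subst_cat subst_inv; last exact: hl_inv.
  exact: req_inv_eq.
have h2 := sound esym eirr (@liftD_inv) (@liftD_rel) h1.
have h3 : raag_eq e (subst (hl k) W) (subst (hl k) (R S)).
  apply: (subst_req (@hl_inv k) (@hl_rel k)); exact: complete.
have h4 := sound esym eirr (@liftD_inv) (@liftD_rel) h3.
have h5 := G_hR esym eirr k S.
rewrite foldr_id in h5; last by apply: red_map => //; exact: G_red.
have hS : S = [::].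
  have := shf_size (shf_trans (shf_sym h5) (shf_trans (shf_sym h4) h2)).
  by rewrite size_map => /size0nil.
have := complete esym W; rewrite -/S hS /= => hW.
exact: req_eq_inv.
Qed.

End Main.

Lemma allps_all P l : (forall a b, P a b) -> allps P l.
Proof. by move=> h; elim: l => //= p l ->; split. Qed.

Lemma all_flat (X : Type) (Y : eqType) (f : X -> seq Y) (P : pred Y) (l : seq X) :
  all P (flatten (map f l)) -> all (fun p => all P (f p)) l.
Proof. by elim: l => //= p l IH; rewrite all_cat => /andP [-> /IH]. Qed.

Section Dirs.
Variables (V : finType) (e : rel V) (m : nat).
Hypotheses (esym : symmetric e) (eirr : irreflexive e).
Local Notation Wm := (V * 'I_m)%type.
Local Notation Em := (inflation_rel e m).

Definition iota0 (i0 : 'I_m) (l : V * bool) : seq (Wm * bool) := [:: ((l.1, i0), l.2)].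

Lemma dir1 (i0 : 'I_m) f :
  satisfies_universal (RAAG Em) f -> satisfies_universal (RAAG e) f.
Proof.
move=> H s; have := H (fun n => subst (iota0 i0) (s n)).
have g_inv : forall l, iota0 i0 (letter_inv l) = word_inv (iota0 i0 l) by case.
have g_rel : forall a b, e a b -> raag_eq Em (iota0 i0 (a, true) ++ iota0 i0 (b, true))
    (iota0 i0 (b, true) ++ iota0 i0 (a, true)).
  move=> a b eab; apply: (raag_comm [::] [::]).
  by rewrite /inflation_rel /= eqxx andbF /= eq_sym (neq_adj eirr eab) eab.
have hid : forall w, subst (hl (fun _ => 1%N)) (subst (iota0 i0) w) = w.
  by elim=> //= l w IH; rewrite -[l :: w]/([:: l] ++ w) !subst_cat IH; case: l.
move=> hs; apply: (proj2 (transfer _)) hs; apply: allps_all => a b /=.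
rewrite !(eval_subst e Em g_inv); split.
  exact: (subst_req g_inv g_rel).
move=> h; have := subst_req (@hl_inv V m (fun _ => 1%N)) (@hl_rel V e m esym (fun _ => 1%N)) h.
by rewrite !hid.
Qed.

Lemma dir2 f : satisfies_universal (RAAG e) f -> satisfies_universal (RAAG Em) f.
Proof.
move=> H s.
set Wp := fun p : gterm * gterm => eval_term s p.1 ++ word_inv (eval_term s p.2).
set vals := flatten [seq map snd (G e (@liftm V m) (Wp p)) | p <- atoms f].
have hv : all (fun a => a != 0%R) vals.
  rewrite /vals; elim: (atoms f) => //= p l IH; rewrite all_cat IH andbT all_map.
  exact: (red_nz (G_red esym eirr _ _)).
have [k hk] := choose_k hv.
have := H (fun n => subst (hl k) (s n)).
move=> hs; apply: (proj1 (transfer _)) hs.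
apply: (allps_of (Q := fun p => all (fun x => phi k x.2 != 0%R) (G e (@liftm V m) (Wp p)))).
  move=> [a b] /= hq.
  rewrite !(eval_subst Em e (@hl_inv V m k)); split.
    exact: reflect_atom.
  exact: (subst_req (@hl_inv V m k) (@hl_rel V e m esym k)).
move: hk; rewrite /vals => /all_flat; apply: sub_all => p /=.
by rewrite all_map.
Qed.
End Dirs.

Theorem proposition4p2 (V : finType) (e : rel V) (m : nat) :
  simplicial e -> 1 <= m ->
  universally_equivalent (RAAG e) (RAAG (inflation_rel e m)).
Proof.
move=> [esym eirr] hm f; split; first exact: dir2.
exact: (dir1 esym eirr (Ordinal hm)).
Qed.
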